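(* Let $f(X)=\sum_{a=(h_1,\dots,h_N)\in\mathcal{A}} w_a\sum_{\biguplus_{i=1}^N X_i=X}\prod_{i=1}^N f_{h_i}(X_i)$ be a multi-Bernoulli mixture. For Bernoulli densities $[g_j]=(g_1,\dots,g_N)$ and, for each $a\in\mathcal{A}$, a probability distribution $q_a$ on $\Pi_N$ (i.e. $q_a(\pi)\ge 0$, $\sum_{\pi\in\Pi_N}q_a(\pi)=1$), define the zero-temperature objective $$\tilde J_0\big([g_j],[q_a(\pi)]\big)=-\sum_{a\in\mathcal{A},\pi\in\Pi_N} w_a q_a(\pi)\sum_{i=1}^N\int f_{h_i}(X)\log g_{\pi(i)}(X)\,\delta X .$$ Then minimising $\tilde J_0$ jointly over $[g_j]$ (Bernoulli densities, $g_j\ge0$, $\int g_j(X)\delta X=1$) and $[q_a(\pi)]$ is equivalent to solving $$\operatorname*{minimise}_{q(h,j)\in\mathcal{P}}\ -\sum_{j=1}^N\int\Big(\sum_{h\in\mathcal{H}}q(h,j)f_h(X)\Big)\log\Big(\sum_{h\in\mathcal{H}}q(h,j)f_h(X)\Big)\,\delta X,$$ where $$\mathcal{P}=\Big\{q(h,j)=\sum_{i=1}^N\Big(\sum_{a=(h_1,\dots,h_N)\in\mathcal{A}:\,h_i=h} w_a\sum_{\pi\in\Pi_N:\,\pi(i)=j}q_a(\pi)\Big)\ \Big|\ q_a(\pi)\ge0,\ \sum_{\pi\in\Pi_N}q_a(\pi)=1\ \forall a\Big\}.$$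
   Context: Single-target states lie in $\mathcal{X}\subseteq\mathbb{R}^d$. The set integral is $\int v(X)\,\delta X = v(\emptyset)+\sum_{n=1}^\infty\frac{1}{n!}\int\cdots\int v(\{x_1,\dots,x_n\})\,\mathrm{d}x_1\cdots\mathrm{d}x_n$. A Bernoulli density with existence probability $r$ and state density $p(x)$ is $b(\emptyset)=1-r$, $b(\{x\})=r\,p(x)$, $b(X)=0$ for $|X|>1$. $\mathcal{H}$ is an index set of single-target hypotheses, each $f_h$ ($h\in\mathcal{H}$) a Bernoulli density; $\mathcal{A}\subseteq\mathcal{H}^N$ is a finite set of global hypotheses $a=(h_1,\dots,h_N)$ with weights $w_a\ge0$, $\sum_a w_a=1$. $\sum_{\biguplus_{i=1}^N X_i=X}$ sums over ordered tuples of disjoint subsets with union $X$. $\Pi_N$ is the set of permutations of $\{1,\dots,N\}$. Convention $0\log0=0$.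
   Formalization: Each fₕ also has x ↦ fₕ({x}) log fₕ({x}) integrable, and 𝓗 is finite; equivalence means that for every admissible $[q_a(\pi)]$ the minimum of $\tilde J_0$ over $[g_j]$ is attained and equals the reduced objective at the induced q(h,j). Apart from conventions, each condition added here is assumed in the paper as well or is needed for the statement above to hold. *)

(* Defs.v *)
From HB Require Import structures.
From mathcomp Require Import all_boot all_order all_algebra all_fingroup.
From mathcomp Require Import all_classical all_reals.
From mathcomp Require Import exp measure lebesgue_measure lebesgue_integral.
Set Implicit Arguments. Unset Strict Implicit. Unset Printing Implicit Defensive.
Import Order.TTheory GRing.Theory Num.Theory.
Local Open Scope ring_scope.

Section Defs.
Context {R : realType} {d : measure_display} {T : measurableType d}.
Variable mu : {measure set T -> \bar R}.

(** [a * log b] with the convention [0 log 0 = 0] (more generally [0 * log b = 0]),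
    and [a * log 0 = -oo] for [a > 0]. *)
Definition xlogy (a b : R) : \bar R :=
  if a == 0 then 0%E else if b <= 0 then (-oo)%E else (a * ln b)%:E.

(** A function on finite subsets of T vanishing on sets of size >= 2 is given by
    its value [u0] at the empty set and [u1 x] at [{x}].  The set integral
    [\int u(X) log v(X) dX] of such functions is then
    [u0 log v0 + \int u1(x) log v1(x) dmu(x)] (higher-order terms vanish). *)
Definition setint_xlogy (u0 : R) (u1 : T -> R) (v0 : R) (v1 : T -> R) : \bar R :=
  (xlogy u0 v0 + \int[mu]_x xlogy (u1 x) (v1 x))%E.

(** Bernoulli density with existence probability [r] and state density [p]:
    b(emptyset) = 1 - r, b({x}) = r p(x). *)
Definition is_bern (r : R) (p : T -> R) : Prop :=
  [/\ 0 <= r <= 1, (forall x, 0 <= p x), measurable_fun setT p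
    & (\int[mu]_x (p x)%:E = 1)%E].

Definition bern0 (r : R) : R := 1 - r.
Definition bern1 (r : R) (p : T -> R) : T -> R := fun x => r * p x.

Variables (N : nat) (H : finType) (fr : H -> R) (fp : H -> T -> R)
  (A : {set N.-tuple H}) (w : N.-tuple H -> R).

Definition J0 (gr : 'I_N -> R) (gp : 'I_N -> T -> R)
    (qa : N.-tuple H -> {perm 'I_N} -> R) : \bar R :=
  (- \sum_(a in A) \sum_(pi : {perm 'I_N})
      (w a * qa a pi)%:E *
      \sum_(i < N) setint_xlogy (bern0 (fr (tnth a i))) (bern1 (fr (tnth a i)) (fp (tnth a i)))
                                (bern0 (gr (pi i))) (bern1 (gr (pi i)) (gp (pi i))))%E.

Definition qP (qa : N.-tuple H -> {perm 'I_N} -> R) (h : H) (j : 'I_N) : R :=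
  \sum_(i < N) \sum_(a in A | tnth a i == h) w a * \sum_(pi : {perm 'I_N} | pi i == j) qa a pi.

Definition mix0 (q : H -> 'I_N -> R) (j : 'I_N) : R :=
  \sum_(h : H) q h j * bern0 (fr h).
Definition mix1 (q : H -> 'I_N -> R) (j : 'I_N) : T -> R :=
  fun x => \sum_(h : H) q h j * bern1 (fr h) (fp h) x.

Definition Obj (q : H -> 'I_N -> R) : \bar R :=
  (- \sum_(j < N) setint_xlogy (mix0 q j) (mix1 q j) (mix0 q j) (mix1 q j))%E.

End Defs.

(* Main.v *)
Require Import Defs.
From HB Require Import structures.
From mathcomp Require Import all_boot all_order all_algebra all_fingroup.
From mathcomp Require Import all_classical all_reals.
From mathcomp Require Import lra.
From mathcomp Require Import exp measure lebesgue_measure lebesgue_integral.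
From mathcomp Require Import measurable_realfun numfun.
Import Order.TTheory GRing.Theory Num.Theory.
Local Open Scope ring_scope.
Section Aux.
Context {R : realType}.
Local Open Scope ereal_scope.
Lemma xlogy0 (G : R) : xlogy 0 G = 0.
Proof. by rewrite /xlogy eqxx. Qed.

Lemma xlogy_sum (I : finType) (c f : I -> R) (G : R) :
  (forall i, (0 <= c i)%R) -> (forall i, (0 <= f i)%R) -> (0 <= G)%R ->
  \sum_i (c i)%:E * xlogy (f i) G = xlogy (\sum_i c i * f i)%R G.
Proof.
move=> c0 f0 G0.
have cf0 i : (0 <= c i * f i)%R by rewrite mulr_ge0.
have [F0|FN0] := eqVneq (\sum_i c i * f i)%R 0%R.
  rewrite F0 xlogy0 big1 // => i _.
  have H0 : (c i * f i = 0)%R by apply: (psumr_eq0P _ F0) => // j _; exact: cf0.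
  move/eqP: H0.
  rewrite mulf_eq0 => /orP[/eqP->|/eqP->]; first by rewrite mul0e.
  by rewrite xlogy0 mule0.
have [i0 ci0] : exists i, (c i * f i != 0)%R.
  apply/existsP; apply: contraNT FN0; rewrite negb_exists => /forallP H.
  by apply/eqP; apply: big1 => i _; move: (H i); rewrite negbK => /eqP.
have [c0' f0'] : (0 < c i0)%R /\ (0 < f i0)%R.
  move: ci0; rewrite mulf_eq0 negb_or => /andP[a b].
  by rewrite !lt0r a b c0 f0.
have [Gle|Ggt] := leP G 0%R.
  rewrite {2}/xlogy (negPf FN0) Gle.
  rewrite (bigD1 i0) //= {1}/xlogy (gt_eqF f0') Gle.
  by rewrite mulrNy gtr0_sg // mul1e addNye.
rewrite {2}/xlogy (negPf FN0) leNgt Ggt /=.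
rewrite mulr_suml -sumEFin; apply: eq_bigr => i _.
rewrite /xlogy; have [->|fi] := eqVneq (f i) 0%R.
  by rewrite mule0 mulr0 mul0r.
by rewrite leNgt Ggt /= -EFinM mulrA.
Qed.

Lemma xlogy_gibbs (F G : R) : (0 <= F)%R -> (0 <= G)%R ->
  xlogy F G <= xlogy F F + (G - F)%:E.
Proof.
move=> F0 G0.
have [->|FN0] := eqVneq F 0%R.
  by rewrite !xlogy0 add0e subr0 lee_fin.
have Fp : (0 < F)%R by rewrite lt0r FN0.
have FleN : (F <= 0)%R = false by rewrite leNgt Fp.
rewrite /xlogy (negPf FN0) FleN.
have [Gle|Ggt] := leP G 0%R; first by rewrite leNye.
rewrite -EFinD lee_fin.
have h := @le_ln1Dx R (G / F - 1)%R.
have : (-1 < G / F - 1)%R.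
  have h0 : (0 < G / F)%R by rewrite divr_gt0.
  lra.
move=> /h; rewrite addrC subrK ln_div ?posrE //.
move=> hh.
have := ler_wpM2l F0 hh.
rewrite mulrBr mulrBr mulr1 mulrCA divff // mulr1.
move=> hh2; rewrite -lerBlDl; apply: le_trans hh2; lra.
Qed.
Lemma ge0_mulEDr (c : R) (a b : \bar R) : (0 <= c)%R ->
  c%:E * (a + b) = c%:E * a + c%:E * b.
Proof.
move=> c0; have [->|cn0] := eqVneq c 0%R; first by rewrite !mul0e adde0.
have cp : (0 < c)%R by rewrite lt0r cn0.
case: a => [a| |]; case: b => [b| |].
- by rewrite -EFinD -!EFinM mulrDr.
- by rewrite /= mulry gtr0_sg // mul1e.
- by rewrite /= mulrNy gtr0_sg // mul1e.
- by rewrite /= mulry gtr0_sg // mul1e.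
- by rewrite /= mulry gtr0_sg // mul1e.
- by rewrite /= mulry mulrNy gtr0_sg // !mul1e.
- by rewrite /= mulrNy gtr0_sg // mul1e.
- by rewrite /= mulrNy gtr0_sg // mul1e.
- by rewrite /= mulrNy gtr0_sg // mul1e.
Qed.

Lemma ge0_mulE_sumr (I : Type) (s : seq I) (P : pred I) (c : R) (F : I -> \bar R) :
  (0 <= c)%R -> c%:E * (\sum_(i <- s | P i) F i) = \sum_(i <- s | P i) c%:E * F i.
Proof.
move=> c0; elim: s => [|x s IH]; first by rewrite !big_nil mule0.
rewrite !big_cons; case: (P x) => //.
by rewrite ge0_mulEDr // IH.
Qed.
End Aux.

Section Meas.
Context {R : realType} {d : measure_display} {T : measurableType d}.
Variable mu : {measure set T -> \bar R}.
Local Open Scope ereal_scope.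
Lemma meas_xlogy (f g : T -> R) : measurable_fun setT f -> measurable_fun setT g ->
  measurable_fun setT (fun x => xlogy (f x) (g x) : \bar R).
Proof.
move=> mf mg; rewrite /xlogy.
apply: measurable_fun_ifT.
  by apply: measurable_fun_eqr => //; exact: measurable_cst.
  exact: measurable_cst.
apply: measurable_fun_ifT.
  by apply: measurable_fun_ler => //; exact: measurable_cst.
  exact: measurable_cst.
apply/measurable_EFinP; apply: measurable_funM => //.
exact: measurableT_comp (@measurable_ln R) mg.
Qed.

Lemma nonint_ninfty (u M : T -> \bar R) : measurable_fun setT u ->
  mu.-integrable setT M -> (forall x, u x <= M x) -> ~ mu.-integrable setT u ->
  \int[mu]_x u x = -oo.
Proof.
move=> mu_ iM uM nI.
rewrite integralE.
suff -> : \int[mu]_x u^\- x = +oo by rewrite addeNy.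
have [//|ninf] := eqVneq (\int[mu]_x u^\- x) +oo.
exfalso; apply: nI.
apply/integrableP; split => //.
have hp : \int[mu]_x u^\+ x <= \int[mu]_x M^\+ x.
  apply: ge0_le_integral => //.
  - by apply: measurable_funepos.
  - by apply: measurable_funepos; case/integrableP: iM.
  - by move=> x _; apply: funepos_le => //; rewrite inE.
have Mp := integrable_pos_fin_num measurableT iM.
rewrite (_ : (fun x => `|u x|) = u^\+ \+ u^\-); last first.
  by rewrite -fune_abse.
rewrite ge0_integralD //; last 2 first.
  - by apply: measurable_funepos.
  - by apply: measurable_funeneg.
rewrite lte_add_pinfty //.
  by apply: le_lt_trans hp _; rewrite ltey_eq Mp.
by rewrite ltey.
Qed.

Lemma scale_int (c : R) (u : T -> \bar R) : c = 0%R \/ mu.-integrable setT u ->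
  c%:E * \int[mu]_x u x = \int[mu]_x (c%:E * u x) /\
  mu.-integrable setT (fun x => c%:E * u x).
Proof.
case=> [->|iu].
  rewrite mul0e; split.
    by rewrite integral0_eq // => x _; rewrite mul0e.
  apply: eq_integrable (integrable0 mu setT) => // x _.
  by rewrite mul0e.
split; first by rewrite integralZl.
exact: integrableZl.
Qed.

Lemma sum_int_eq (I : finType) (c : I -> R) (u : I -> T -> \bar R) :
  (forall i, c i = 0%R \/ mu.-integrable setT (u i)) ->
  \sum_i (c i)%:E * \int[mu]_x u i x = \int[mu]_x (\sum_i (c i)%:E * u i x) /\
  mu.-integrable setT (fun x => \sum_i (c i)%:E * u i x).
Proof.
move=> h; split.
  rewrite integral_sum //; last by move=> i; case: (scale_int _ _ (h i)).
  by apply: eq_bigr => i _; case: (scale_int _ _ (h i)).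
by apply: integrable_sum => // i _; case: (scale_int _ _ (h i)).
Qed.

Lemma sum_int_le (I : finType) (c : I -> R) (u M : I -> T -> \bar R) (B : \bar R) :
  (forall i, (0 <= c i)%R) -> (forall i, measurable_fun setT (u i)) ->
  (forall i, mu.-integrable setT (M i)) -> (forall i x, u i x <= M i x) ->
  ((forall i, c i = 0%R \/ mu.-integrable setT (u i)) ->
     \int[mu]_x (\sum_i (c i)%:E * u i x) <= B) ->
  \sum_i (c i)%:E * \int[mu]_x u i x <= B.
Proof.
move=> c0 mu_ iM uM hB.
have [h|h] := pselect (forall i, c i = 0%R \/ mu.-integrable setT (u i)).
  by case: (@sum_int_eq _ _ _ h) => -> _; exact: hB.
have [i0 hi0] : exists i, ~ (c i = 0%R \/ mu.-integrable setT (u i)).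
  by apply/existsNP.
have [cn0 ni] : c i0 <> 0%R /\ ~ mu.-integrable setT (u i0).
  by split => hh; apply: hi0; [left|right].
have cp : (0 < c i0)%R by rewrite lt0r c0 andbT; apply/eqP.
rewrite (bigD1 i0) //= (nonint_ninfty _ _ (mu_ i0) (iM i0) (uM i0) ni).
by rewrite mulrNy gtr0_sg // mul1e addNye leNye.
Qed.
End Meas.
Section Regroup.
Context {R : realType} (N : nat) (H : finType)
  (A : {set N.-tuple H}) (w : N.-tuple H -> R) (qa : N.-tuple H -> {perm 'I_N} -> R).
Local Open Scope ereal_scope.

Lemma sumEl (I : Type) (s : seq I) (P : pred I) (c : I -> R) (x : \bar R) :
  (forall k, P k -> (0 <= c k)%R) ->
  \sum_(k <- s | P k) (c k)%:E * x = (\sum_(k <- s | P k) c k)%:E * x.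
Proof.
by move=> c0; rewrite -sumEFin ge0_sume_distrl // => k /c0; rewrite lee_fin.
Qed.

Lemma sum_mkcondr (I : finType) (P Q : pred I) (F : I -> R) :
  (\sum_(i | P i && Q i) F i = \sum_(i | P i) (if Q i then F i else 0))%R.
Proof. by rewrite big_mkcondr. Qed.

Lemma sum_mkcond (I : finType) (Q : pred I) (F : I -> R) :
  (\sum_(i | Q i) F i = \sum_i (if Q i then F i else 0))%R.
Proof. by rewrite big_mkcond. Qed.

Lemma regroup (S : H -> 'I_N -> \bar R) :
  (forall a, a \in A -> (0 <= w a)%R) -> (forall a pi, a \in A -> (0 <= qa a pi)%R) ->
  \sum_(a in A) \sum_(pi : {perm 'I_N}) (w a * qa a pi)%:E * \sum_(i < N) S (tnth a i) (pi i)
  = \sum_(j < N) \sum_(h : H) (qP A w qa h j)%:E * S h j.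
Proof.
move=> w0 q0.
pose e a (pi : {perm 'I_N}) (i : 'I_N) h (j : 'I_N) :=
  if (tnth a i == h) && (pi i == j) then (w a * qa a pi)%R else 0%R.
have e0 a pi i h j : a \in A -> (0 <= e a pi i h j)%R.
  by move=> aA; rewrite /e; case: ifP => // _; rewrite mulr_ge0 ?w0 ?q0.
transitivity (\sum_(a in A) \sum_(pi : {perm 'I_N}) \sum_(i < N) \sum_(j < N)
   \sum_(h : H) (e a pi i h j)%:E * S h j).
  apply: eq_bigr => a aA; apply: eq_bigr => pi _.
  rewrite ge0_mulE_sumr ?mulr_ge0 ?w0 ?q0 //; apply: eq_bigr => i _.
  rewrite (bigD1 (pi i)) //= (bigD1 (tnth a i)) //= /e !eqxx /=.
  rewrite big1 ?adde0; last first.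
    by move=> h hne; rewrite eq_sym (negPf hne) /= mul0e.
  rewrite big1 ?adde0 // => j jne; rewrite big1 // => h _.
  by rewrite /e [pi i == j]eq_sym (negPf jne) andbF mul0e.
under eq_bigr => a aA do under eq_bigr => p _ do rewrite exchange_big.
under eq_bigr => a aA do under eq_bigr => p _ do under eq_bigr => j _ do rewrite exchange_big.
under eq_bigr => a aA do rewrite exchange_big.
under eq_bigr => a aA do under eq_bigr => j _ do rewrite exchange_big.
rewrite exchange_big; apply: eq_bigr => j _.
rewrite exchange_big; apply: eq_bigr => h _.
transitivity ((\sum_(a in A) \sum_(pi : {perm 'I_N}) \sum_(i < N) e a pi i h j)%:E * S h j).
  rewrite -sumEl => [|a aA]; last first.
    by apply: sumr_ge0 => pi _; apply: sumr_ge0 => i _; exact: e0.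
  apply: eq_bigr => a aA.
  rewrite -sumEl => [|pi _]; last by apply: sumr_ge0 => i _; exact: e0.
  apply: eq_bigr => pi _.
  by rewrite -sumEl // => i _; exact: e0.
congr (_%:E * _).
rewrite /qP exchange_big /=.
under eq_bigr => a aA do rewrite exchange_big /=.
rewrite exchange_big /=; apply: eq_bigr => i _.
rewrite exchange_big /= sum_mkcondr; apply: eq_big => // a aA.
case: ifP => ah; last first.
  by rewrite big1 // => pi _; rewrite /e ah.
rewrite mulr_sumr [RHS]sum_mkcond; apply: eq_big => // pi _.
by rewrite /e ah /=; case: (pi i == j); rewrite ?mulr0.
Qed.
End Regroup.

Section Meas2.
Context {R : realType} {d : measure_display} {T : measurableType d}.
Variable mu : {measure set T -> \bar R}.
Local Open Scope ereal_scope.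

Lemma gibbs_r (F G : R) : (0 < F)%R -> (0 < G)%R -> (F * ln G <= F * ln F + (G - F))%R.
Proof.
move=> Fp Ggt.
have h := @le_ln1Dx R (G / F - 1)%R.
have : (-1 < G / F - 1)%R.
  have h0 : (0 < G / F)%R by rewrite divr_gt0.
  lra.
move=> /h; rewrite addrC subrK ln_div ?posrE // => hh.
have := ler_wpM2l (ltW Fp) hh.
rewrite mulrBr mulrBr mulr1 mulrCA divff ?gt_eqF // mulr1.
move=> hh2; rewrite -lerBlDl; apply: le_trans hh2; lra.
Qed.

Lemma integrable_nn (f : T -> R) : measurable_fun setT f -> (forall x, 0 <= f x)%R ->
  \int[mu]_x (f x)%:E < +oo -> mu.-integrable setT (EFin \o f).
Proof.
move=> mf f0 hf; apply/integrableP; split; first exact/measurable_EFinP.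
rewrite (eq_integral (fun x => (f x)%:E)) // => x _.
rewrite [(EFin \o f) x]/comp abse_EFin ger0_norm //.
Qed.

Lemma int_xlogy_mix (f F : T -> R) (k : R) : (0 < k)%R -> (forall x, 0 <= f x)%R ->
  (forall x, k * f x <= F x)%R -> measurable_fun setT f -> measurable_fun setT F ->
  mu.-integrable setT (fun x => (f x * ln (f x))%:E) ->
  mu.-integrable setT (EFin \o F) -> mu.-integrable setT (EFin \o f) ->
  mu.-integrable setT (fun x => xlogy (f x) (F x)).
Proof.
move=> kp f0 kF mf mF ifl iF iff.
have F0 x : (0 <= F x)%R by apply: le_trans (kF x); rewrite mulr_ge0 // ltW.
have ig : mu.-integrable setT (fun x => (`|f x * ln (f x)| + `|ln k| * f x + F x)%:E).
  have i1 := integrable_abse ifl.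
  have i2 := integrableZl measurableT (`|ln k|) iff.
  have i12 := integrableD measurableT i1 i2.
  apply: (eq_integrable measurableT _ _ _ (integrableD measurableT i12 iF)) => x _.
  by rewrite /comp /= -EFinM -!EFinD.
apply: le_integrable ig => //.
  exact: meas_xlogy.
move=> x _.
rewrite /xlogy; have [->|fn0] := eqVneq (f x) 0%R.
  by rewrite abse0 abse_ge0.
have fp : (0 < f x)%R by rewrite lt0r fn0 f0.
have Fp : (0 < F x)%R by apply: lt_le_trans (kF x); rewrite mulr_gt0.
have FleN : (F x <= 0)%R = false by rewrite leNgt Fp.
rewrite FleN !abse_EFin lee_fin.
rewrite [X in (_ <= X)%R]ger0_norm; last first.
  by rewrite !addr_ge0 // mulr_ge0.
rewrite ler_norml; apply/andP; split.
  have h1 : (ln (k * f x) <= ln (F x))%R by rewrite ler_ln ?posrE ?mulr_gt0.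
  rewrite lnM ?posrE // in h1.
  have h2 := ler_wpM2l (ltW fp) h1.
  have h3 := ler_norm (- (f x * ln (f x))); rewrite normrN in h3.
  have h5 := ler_wpM2r (f0 x) (ler_norm (- ln k)); rewrite normrN in h5.
  move: h2 h3 h5; rewrite mulrDr mulNr (mulrC (ln k)).
  set a := (f x * ln (f x))%R; set b := (f x * ln k)%R; set c := (f x * ln (F x))%R.
  set e := (`|ln k| * f x)%R.
  have := F0 x; set FF := F x; set aa := (`|a|)%R; lra.
have h2 := gibbs_r (f x) (F x) fp Fp.
have h3 := ler_norm (f x * ln (f x)).
have h4 : (0 <= `|ln k| * f x)%R by rewrite mulr_ge0.
move: h2 h3 h4.
set a := (f x * ln (f x))%R; set c := (f x * ln (F x))%R.
set e := (`|ln k| * f x)%R; set FF := F x; set aa := (`|a|)%R; have := f0 x; set ff := f x.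
lra.
Qed.
End Meas2.

Section Meas3.
Context {R : realType} {d : measure_display} {T : measurableType d}.
Variable mu : {measure set T -> \bar R}.
Local Open Scope ereal_scope.

Lemma goalE (I : finType) (q b : I -> R) (f : I -> T -> R) :
  (forall i, 0 <= q i)%R -> (forall i, 0 <= b i)%R -> (forall i x, 0 <= f i x)%R ->
  (forall i, q i = 0%R \/
     mu.-integrable setT (fun x => xlogy (f i x) (\sum_i0 q i0 * f i0 x)%R)) ->
  \sum_i (q i)%:E * setint_xlogy mu (b i) (f i) (\sum_i0 q i0 * b i0)%R
       (fun x => \sum_i0 q i0 * f i0 x)%R
  = setint_xlogy mu (\sum_i0 q i0 * b i0)%R (fun x => \sum_i0 q i0 * f i0 x)%R
       (\sum_i0 q i0 * b i0)%R (fun x => \sum_i0 q i0 * f i0 x)%R.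
Proof.
move=> q0 b0 f0 hU.
have F00 : (0 <= \sum_i0 q i0 * b i0)%R by apply: sumr_ge0 => i _; rewrite mulr_ge0.
have F10 x : (0 <= \sum_i0 q i0 * f i0 x)%R by apply: sumr_ge0 => i _; rewrite mulr_ge0.
rewrite /setint_xlogy (eq_bigr (fun i => (q i)%:E * xlogy (b i) (\sum_i0 q i0 * b i0)%R +
   (q i)%:E * \int[mu]_x xlogy (f i x) (\sum_i0 q i0 * f i0 x)%R)); last first.
  by move=> i _; rewrite ge0_mulEDr.
rewrite big_split /= xlogy_sum //; congr (_ + _).
case: (sum_int_eq mu _ _ _ hU) => -> _.
by apply: eq_integral => x _; rewrite xlogy_sum.
Qed.

Lemma goalI (I : finType) (q b : I -> R) (f : I -> T -> R) (G0 : R) (G1 : T -> R)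
    (g1 f1 : R) :
  (forall i, 0 <= q i)%R -> (forall i, 0 <= b i)%R -> (forall i x, 0 <= f i x)%R ->
  (forall i, measurable_fun setT (f i)) ->
  (forall i, mu.-integrable setT (fun x => (f i x * ln (f i x))%:E)) ->
  (forall i, mu.-integrable setT (EFin \o f i)) ->
  (0 <= G0)%R -> (forall x, 0 <= G1 x)%R -> measurable_fun setT G1 ->
  mu.-integrable setT (EFin \o G1) ->
  (forall i, q i = 0%R \/
     mu.-integrable setT (fun x => xlogy (f i x) (\sum_i0 q i0 * f i0 x)%R)) ->
  \int[mu]_x (G1 x)%:E = g1%:E ->
  \int[mu]_x (\sum_i0 q i0 * f i0 x)%:E = f1%:E ->
  (G0 + g1 = \sum_i0 q i0 * b i0 + f1)%R ->
  \sum_i (q i)%:E * setint_xlogy mu (b i) (f i) G0 G1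
  <= setint_xlogy mu (\sum_i0 q i0 * b i0)%R (fun x => \sum_i0 q i0 * f i0 x)%R
       (\sum_i0 q i0 * b i0)%R (fun x => \sum_i0 q i0 * f i0 x)%R.
Proof.
move=> q0 b0 f0 mf ifl iff G00 G10 mG1 iG1 hU hg1 hf1 hmass.
set F0 := (\sum_i0 q i0 * b i0)%R.
set F1 := (fun x => \sum_i0 q i0 * f i0 x)%R.
have F00 : (0 <= F0)%R by apply: sumr_ge0 => i _; rewrite mulr_ge0.
have F10 x : (0 <= F1 x)%R by apply: sumr_ge0 => i _; rewrite mulr_ge0.
have mF1 : measurable_fun setT F1.
  by apply: measurable_sum => i; apply: measurable_funM => //; exact: measurable_cst.
have iF1 : mu.-integrable setT (EFin \o F1).
  have := integrable_sum measurableT (index_enum I) (P := xpredT)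
    (h := fun i x => (q i)%:E * (EFin \o f i) x) (fun i _ => integrableZl measurableT (q i) (iff i)).
  apply: eq_integrable => // x _.
  by rewrite /comp /F1 -sumEFin; apply: eq_bigr => i _; rewrite EFinM.
have iFF : mu.-integrable setT (fun x => xlogy (F1 x) (F1 x)).
  case: (sum_int_eq mu _ _ _ hU) => _.
  apply: eq_integrable => // x _; rewrite xlogy_sum //; exact: F10.
rewrite /setint_xlogy (eq_bigr (fun i => (q i)%:E * xlogy (b i) G0 +
   (q i)%:E * \int[mu]_x xlogy (f i x) (G1 x))); last first.
  by move=> i _; rewrite ge0_mulEDr.
rewrite big_split /= xlogy_sum //.
have h1 := xlogy_gibbs _ _ F00 G00.
have h2 : \sum_i (q i)%:E * \int[mu]_x xlogy (f i x) (G1 x) <=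
          \int[mu]_x xlogy (F1 x) (F1 x) + (g1 - f1)%:E.
  apply: (sum_int_le mu _ _ _ (fun i x => xlogy (f i x) (f i x) + (G1 x - f i x)%:E)).
  - exact: q0.
  - by move=> i; apply: meas_xlogy.
  - move=> i; apply: integrableD => //.
      apply: eq_integrable (ifl i) => // x _.
      rewrite /xlogy; have [->|fn0] := eqVneq (f i x) 0%R; first by rewrite mul0r.
      by rewrite leNgt lt0r fn0 f0.
    apply: (eq_integrable measurableT _ _ _ (integrableB measurableT iG1 (iff i))) => x _.
    by rewrite /comp /= EFinB.
  - by move=> i x; apply: xlogy_gibbs.
  move=> hu; case: (sum_int_eq mu _ _ _ hu) => _ iS.
  rewrite (eq_integral (fun x => xlogy (F1 x) (G1 x))); last first.
    by move=> x _; rewrite xlogy_sum //; exact: G10.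
  have iB : mu.-integrable setT (fun x => ((G1 x)%:E - (F1 x)%:E)).
    exact: (integrableB measurableT iG1 iF1).
  apply: (@le_trans _ _ (\int[mu]_x (xlogy (F1 x) (F1 x) + ((G1 x)%:E - (F1 x)%:E)))).
    apply: le_integral => //.
    - by apply: eq_integrable iS => // x _; rewrite xlogy_sum //; exact: G10.
    - exact: integrableD.
    - by move=> x _; rewrite -EFinB; apply: xlogy_gibbs.
  rewrite integralD // integralB_EFin //.
  by rewrite hg1 hf1 EFinB.
apply: le_trans (leeD h1 h2) _.
rewrite addeACA -EFinD.
have -> : (G0 - F0 + (g1 - f1) = 0)%R by rewrite /F0; lra.
by rewrite adde0.
Qed.
End Meas3.

Theorem theorem6 (R : realType) (d : measure_display) (T : measurableType d)
  (mu : {measure set T -> \bar R})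
  (N : nat) (H : finType) (fr : H -> R) (fp : H -> T -> R)
  (A : {set N.-tuple H}) (w : N.-tuple H -> R)
  (Hf : forall h, is_bern mu (fr h) (fp h))
  (Hent : forall h, mu.-integrable setT
            (fun x => ((bern1 (fr h) (fp h) x) * ln (bern1 (fr h) (fp h) x))%:E))
  (Hw0 : forall a, a \in A -> 0 <= w a)
  (Hw1 : \sum_(a in A) w a = 1)
  (qa : N.-tuple H -> {perm 'I_N} -> R)
  (Hq0 : forall a pi, a \in A -> 0 <= qa a pi)
  (Hq1 : forall a, a \in A -> \sum_(pi : {perm 'I_N}) qa a pi = 1) :
  exists (gr : 'I_N -> R) (gp : 'I_N -> T -> R),
    [/\ forall j, is_bern mu (gr j) (gp j),
        J0 mu fr fp A w gr gp qa = Obj mu fr fp (qP A w qa)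
      & forall (gr' : 'I_N -> R) (gp' : 'I_N -> T -> R),
          (forall j, is_bern mu (gr' j) (gp' j)) ->
          (J0 mu fr fp A w gr gp qa <= J0 mu fr fp A w gr' gp' qa)%E].
Proof.
set q := qP A w qa.
have q0 h j : 0 <= q h j.
  rewrite /q /qP; apply: sumr_ge0 => i _; apply: sumr_ge0 => a /andP[aA _].
  by rewrite mulr_ge0 ?Hw0 // sumr_ge0 // => pi _; exact: Hq0.
have fr01 h : 0 <= fr h <= 1 by case: (Hf h).
have fr0 h : 0 <= fr h by case/andP: (fr01 h).
have fr1 h : fr h <= 1 by case/andP: (fr01 h).
have fp0 h x : 0 <= fp h x by case: (Hf h).
have mfp h : measurable_fun setT (fp h) by case: (Hf h).
have ifp1 h : (\int[mu]_x (fp h x)%:E = 1)%E by case: (Hf h).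
have ifp h : mu.-integrable setT (EFin \o fp h).
  by apply: integrable_nn => //; rewrite ifp1 ltey.
have perm1 (pi : {perm 'I_N}) j (X : R) : \sum_(i < N | pi i == j) X = X.
  by rewrite (big_pred1 ((pi^-1)%g j)) // => i /=; exact: (can2_eq (permK pi) (permKV pi)).
have q1 j : \sum_h q h j = 1.
  rewrite /q /qP exchange_big /=.
  transitivity (\sum_(i < N) \sum_(a in A) w a * \sum_(pi : {perm 'I_N} | pi i == j) qa a pi).
    apply: eq_bigr => i _.
    by rewrite [RHS](partition_big (fun a => tnth a i) xpredT).
  rewrite exchange_big /= -Hw1; apply: eq_big => // a aA.
  rewrite -mulr_sumr -[RHS]mulr1 -(Hq1 a aA); congr (_ * _).
  under eq_bigr => i _ do rewrite sum_mkcond.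
  rewrite exchange_big; apply: eq_bigr => pi _.
  by rewrite -sum_mkcond perm1.
have int_mix (cc : H -> R) :
    mu.-integrable setT (EFin \o (fun x => \sum_h cc h * fp h x)) /\
    (\int[mu]_x (\sum_h cc h * fp h x)%:E = (\sum_h cc h)%:E)%E.
  have ih h : mu.-integrable setT (fun x => (cc h)%:E * (EFin \o fp h) x)%E.
    exact: integrableZl.
  have eqf x : ((\sum_h cc h * fp h x)%:E = \sum_h (cc h)%:E * (EFin \o fp h) x)%E.
    by rewrite -sumEFin; apply: eq_bigr => h _; rewrite EFinM.
  split.
    apply: (eq_integrable measurableT _ _ _ (integrable_sum measurableT (index_enum H)
      (P := xpredT) (fun h _ => ih h))) => x _.
    by rewrite /comp eqf.
  rewrite (eq_integral (fun x => \sum_h (cc h)%:E * (EFin \o fp h) x)%E); last first.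
    by move=> x _; rewrite eqf.
  rewrite integral_sum // -sumEFin; apply: eq_bigr => h _.
  by rewrite integralZl // ifp1 mule1.
pose gr j := \sum_h q h j * fr h.
pose c j h := if gr j == 0 then q h j else q h j * fr h / gr j.
pose gp j x := \sum_h c j h * fp h x.
have gr0 j : 0 <= gr j by apply: sumr_ge0 => h _; rewrite mulr_ge0.
have gr1 j : gr j <= 1.
  rewrite -(q1 j); apply: ler_sum => h _.
  by rewrite ler_piMr.
have c0 j h : 0 <= c j h.
  by rewrite /c; case: ifP => _ //; rewrite divr_ge0 ?mulr_ge0.
have csum j : \sum_h c j h = 1.
  rewrite /c; case: eqP => [_|/eqP gn0]; first exact: q1.
  by rewrite -mulr_suml divff.
have hb0 j : bern0 (gr j) = mix0 fr q j.
  rewrite /bern0 /mix0 /gr.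
  under [RHS]eq_bigr => h _ do rewrite /bern0 mulrBr mulr1.
  by rewrite sumrB q1.
have hb1 j : bern1 (gr j) (gp j) = mix1 fr fp q j.
  apply/funext => x; rewrite /bern1 /mix1 /gp.
  have [g0|gn0] := eqVneq (gr j) 0.
    rewrite g0 mul0r; apply/esym/big1 => h _.
    have : q h j * fr h = 0.
      by apply: (psumr_eq0P _ g0) => // h' _; rewrite mulr_ge0.
    by rewrite /bern1 mulrA => ->; rewrite mul0r.
  rewrite mulr_sumr; apply: eq_bigr => h _.
  by rewrite /c (negPf gn0) /bern1 mulrA (mulrC (gr j)) divfK // mulrA.
have mf h : measurable_fun setT (bern1 (fr h) (fp h)).
  by apply: measurable_funM => //; exact: measurable_cst.
have if1 h : mu.-integrable setT (EFin \o bern1 (fr h) (fp h)).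
  apply: (eq_integrable measurableT _ _ _ (integrableZl measurableT (fr h) (ifp h))) => x _.
  by rewrite /comp /bern1 EFinM.
have f0 h x : 0 <= bern1 (fr h) (fp h) x by rewrite /bern1 mulr_ge0.
have b0 h : 0 <= bern0 (fr h) by rewrite /bern0 subr_ge0.
have imix1 j : mu.-integrable setT (EFin \o mix1 fr fp q j) /\
    (\int[mu]_x (mix1 fr fp q j x)%:E = (gr j)%:E)%E.
  have [i1 i2] := int_mix (fun h => q h j * fr h).
  have e : mix1 fr fp q j = (fun x => \sum_h q h j * fr h * fp h x).
    by apply/funext => x; rewrite /mix1; apply: eq_bigr => h _; rewrite /bern1 mulrA.
  by rewrite e; split.
have hU j h : q h j = 0 \/ mu.-integrable setT
    (fun x => xlogy (bern1 (fr h) (fp h) x) (\sum_h0 q h0 j * bern1 (fr h0) (fp h0) x)).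
  have [->|qn0] := eqVneq (q h j) 0; first by left.
  right; apply: (int_xlogy_mix mu _ (mix1 fr fp q j) (q h j)).
  - by rewrite lt0r qn0 q0.
  - exact: f0.
  - move=> x; rewrite /mix1 (bigD1 h) //= lerDl.
    by apply: sumr_ge0 => h' _; rewrite mulr_ge0.
  - exact: mf.
  - by apply: measurable_sum => h'; apply: measurable_funM => //; exact: measurable_cst.
  - exact: Hent.
  - by case: (imix1 j).
  - exact: if1.
have hJ : J0 mu fr fp A w gr gp qa = Obj mu fr fp q.
  rewrite /J0 (regroup _ _ A w qa (fun h j => setint_xlogy mu (bern0 (fr h))
     (bern1 (fr h) (fp h)) (bern0 (gr j)) (bern1 (gr j) (gp j)))) //.
  rewrite /Obj; congr (- _)%E; apply: eq_bigr => j _.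
  rewrite hb0 hb1.
  exact: (goalE mu _ (fun h => q h j) (fun h => bern0 (fr h)) (fun h => bern1 (fr h) (fp h))
    (fun h => q0 h j) b0 f0 (hU j)).
exists gr, gp; split => //.
  move=> j; split.
  - by rewrite gr0 gr1.
  - by move=> x; apply: sumr_ge0 => h _; rewrite mulr_ge0.
  - by apply: measurable_sum => h; apply: measurable_funM => //; exact: measurable_cst.
  - have [_ ->] := int_mix (c j); by rewrite csum.
move=> gr' gp' hb'.
rewrite hJ /J0 (regroup _ _ A w qa (fun h j => setint_xlogy mu (bern0 (fr h))
     (bern1 (fr h) (fp h)) (bern0 (gr' j)) (bern1 (gr' j) (gp' j)))) //.
rewrite /Obj leeN2; apply: lee_sum => j _.
have [r01 p0 mp ip1] := hb' j.
have ip : mu.-integrable setT (EFin \o gp' j).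
  by apply: integrable_nn => //; rewrite ip1 ltey.
have [imx _] := imix1 j.
apply: (goalI mu _ (fun h => q h j) (fun h => bern0 (fr h)) (fun h => bern1 (fr h) (fp h))
   _ _ (gr' j) (gr j)).
- by move=> h; exact: q0.
- exact: b0.
- exact: f0.
- exact: mf.
- exact: Hent.
- exact: if1.
- by rewrite /bern0 subr_ge0; case/andP: r01.
- by move=> x; rewrite /bern1 mulr_ge0 //; case/andP: r01.
- by apply: measurable_funM => //; exact: measurable_cst.
- apply: (eq_integrable measurableT _ _ _ (integrableZl measurableT (gr' j) ip)) => x _.
  by rewrite /comp /bern1 EFinM.
- exact: hU.
- rewrite (eq_integral (fun x => (gr' j)%:E * (EFin \o gp' j) x)%E); last first.
    by move=> x _; rewrite /comp /bern1 EFinM.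
  by rewrite integralZl // ip1 mule1.
- exact: (proj2 (imix1 j)).
- have := hb0 j; rewrite /mix0 /bern0 => <-; lra.
Qed.
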